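(* The composition map $(c,d)\mapsto c\circ d$, restricted to $\mathtt{CA}\times\mathtt{SUR}$, is continuous from $(\mathtt{CA},\delta)\times(\mathtt{SUR},\delta)$ to $(\mathtt{CA},\delta)$.
   Context: $\Sigma$ is a finite alphabet with $|\Sigma|\ge2$. For $r\in\mathbb{N}$, $N(r)=[-r,r]\subseteq\mathbb{Z}$. A cellular automaton (CA) $c:\Sigma^\mathbb{Z}\to\Sigma^\mathbb{Z}$ is a map given by a local function $F:\Sigma^{N(r)}\to\Sigma$ via $c(x)_i=F(x_{[i-r,i+r]})$ for some $r\in\mathbb{N}$ (any such $r$ is a radius of $c$; the minimal one is $r(c)$); equivalently, a continuous shift-commuting map. $\mathtt{CA}$ is the set of all CA on $\Sigma^\mathbb{Z}$ and $\mathtt{SUR}$ the set of surjective ones. For $c,d\in\mathtt{CA}$ and a common radius $r$, the difference set is $D^c_d=\{w\in\Sigma^{N(r)}\mid c(x)_0\ne d(x)_0 \text{ for } x \text{ with } x_{[-r,r]}=w\}$ (i.e. the words on which the local rules of $c$ and $d$ give different central outputs), and the metric is $\delta(c,d)=|D^c_d|/|\Sigma|^{2r+1}$, which does not depend on the choice of $r$. $(\mathtt{CA},\delta)$ is called the uniform Bernoulli space. *)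

(* Defs.v *)
From HB Require Import structures.
From mathcomp Require Import all_boot all_order all_algebra.
From Stdlib Require Import ClassicalEpsilon.
Set Implicit Arguments. Unset Strict Implicit. Unset Printing Implicit Defensive.
Import Order.TTheory GRing.Theory Num.Theory.
Local Open Scope ring_scope.

Definition config (S : finType) := int -> S.

Definition window (S : finType) (r : nat) (x : config S) (i : int)
  : {ffun 'I_(r.*2).+1 -> S} :=
  [ffun k : 'I_(r.*2).+1 => x (i - r%:Z + (nat_of_ord k)%:Z)].

Definition is_radius (S : finType) (c : config S -> config S) (r : nat) : Prop :=
  exists F : {ffun 'I_(r.*2).+1 -> S} -> S,
    forall (x : config S) (i : int), c x i = F (window r x i).

Definition isCA (S : finType) (c : config S -> config S) : Prop :=
  exists r : nat, is_radius c r.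

Definition isSurjective (S : finType) (c : config S -> config S) : Prop :=
  forall y : config S, exists x : config S, c x = y.

(* some configuration x with x_[-r,r] = w (arbitrary outside) *)
Definition extend (S : finType) (r : nat) (w : {ffun 'I_(r.*2).+1 -> S})
  : config S :=
  fun j => if (- (r%:Z) <= j) && (j <= r%:Z)
           then w (inord (absz (j + r%:Z)))
           else w ord0.

Definition diffset (S : finType) (r : nat) (c d : config S -> config S)
  : {set {ffun 'I_(r.*2).+1 -> S}} :=
  [set w | c (extend w) 0 != d (extend w) 0].

Definition delta_r (S : finType) (r : nat) (c d : config S -> config S) : rat :=
  (#|diffset r c d|)%:R / ((#|S| ^ (r.*2).+1)%N)%:R.

(* a chosen radius of c (any radius, when c is a CA) *)
Definition some_radius (S : finType) (c : config S -> config S) : nat :=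
  epsilon (inhabits 0%N) (fun r => is_radius c r).

Definition delta (S : finType) (c d : config S -> config S) : rat :=
  delta_r (maxn (some_radius c) (some_radius d)) c d.

(* Main.v *)
Require Import Defs.
From HB Require Import structures.
From mathcomp Require Import all_boot all_order all_algebra.
From mathcomp Require Import zify ring lra.
From Stdlib Require Import ClassicalEpsilon FunctionalExtensionality.
Set Implicit Arguments. Unset Strict Implicit. Unset Printing Implicit Defensive.
Import Order.TTheory GRing.Theory Num.Theory.

Lemma size_take_tup (S : finType) n m (t : (n+m).-tuple S) : size (take n t) == n.
Proof. by rewrite size_takel // size_tuple leq_addr. Qed.
Lemma size_drop_tup (S : finType) n m (t : (n+m).-tuple S) : size (drop n t) == m.
Proof. by rewrite size_drop size_tuple addKn. Qed.

Lemma sum_cat (S : finType) n m (F : seq S -> nat) :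
  \sum_(t : (n+m).-tuple S) F t =
  \sum_(t1 : n.-tuple S) \sum_(t2 : m.-tuple S) F (t1 ++ t2).
Proof.
rewrite pair_bigA /=.
pose h (p : n.-tuple S * m.-tuple S) := cat_tuple p.1 p.2.
rewrite (reindex h) //=.
exists (fun t => (Tuple (size_take_tup t), Tuple (size_drop_tup t))) => [p _|t _].
- case: p => t1 t2; congr pair; apply: val_inj => /=.
  + by rewrite take_size_cat // size_tuple.
  + by rewrite drop_size_cat // size_tuple.
- by apply: val_inj => /=; rewrite cat_take_drop.
Qed.

Definition ext (S : finType) (x0 : S) (a : int) (s : seq S) : config S :=
  fun j => if (a <= j)%R then nth x0 s (absz (j - a)) else x0.

Definition dep (S : finType) (a : int) (n : nat) (P : config S -> bool) :=
  forall x y : config S, (forall j : int, (a <= j)%R -> (j < a + (Posz n))%R -> x j = y j) ->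
    P x = P y.

Definition cnt (S : finType) (x0 : S) (a : int) (n : nat) (P : config S -> bool) :=
  \sum_(t : n.-tuple S) P (ext x0 a t).

Lemma test (a j : int) (k : nat) : (a <= j)%R -> absz (j - (a - (Posz k)))%R = (absz (j - a)%R + k)%N.
Proof. move=> h. lia. Qed.

Lemma sum_const_tuple (S : finType) k (c : nat) :
  \sum_(t : k.-tuple S) c = (#|S| ^ k * c)%N.
Proof. by rewrite sum_nat_const card_tuple. Qed.

Lemma cnt_right (S : finType) (x0 : S) a n k P :
  dep a n P -> cnt x0 a (n + k) P = (cnt x0 a n P * #|S| ^ k)%N.
Proof.
move=> dP; rewrite /cnt (sum_cat _ _ (fun s => nat_of_bool (P (ext x0 a s)))) big_distrl /=.
apply: eq_bigr => t1 _.
rewrite (eq_bigr (fun _ => nat_of_bool (P (ext x0 a t1)))); last first.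
  move=> t2 _; congr nat_of_bool; apply: dP => j h1 h2.
  rewrite /ext h1 nth_cat size_tuple; case: ifP => //; lia.
by rewrite sum_const_tuple mulnC.
Qed.

Lemma cnt_left (S : finType) (x0 : S) a n k P :
  dep a n P -> cnt x0 (a - Posz k)%R (k + n) P = (#|S| ^ k * cnt x0 a n P)%N.
Proof.
move=> dP; rewrite /cnt (sum_cat _ _ (fun s => nat_of_bool (P (ext x0 (a - Posz k)%R s)))).
rewrite (eq_bigr (fun _ => \sum_(t2 : n.-tuple S) P (ext x0 a t2))); last first.
  move=> t1 _; apply: eq_bigr => t2 _.
  congr nat_of_bool; apply: dP => j h1 h2.
  have h3 : (a - Posz k <= j)%R by lia.
  rewrite /ext h1 h3 nth_cat size_tuple; case: ifP; first lia.
  move=> _; congr nth; lia.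
by rewrite sum_const_tuple.
Qed.

Lemma dep_mono (S : finType) a n a' n' (P : config S -> bool) :
  dep a n P -> (a' <= a)%R -> (a + Posz n <= a' + Posz n')%R -> dep a' n' P.
Proof. move=> dP h1 h2 x y hxy; apply: dP => j j1 j2; apply: hxy; lia. Qed.

Definition dens (S : finType) (x0 : S) a n P : rat :=
  ((cnt x0 a n P)%:R / (#|S| ^ n)%:R)%R.

Lemma dens_eq (S : finType) (x0 : S) a n a' n' P :
  dep a n P -> (a' <= a)%R -> (a + Posz n <= a' + Posz n')%R ->
  dens x0 a' n' P = dens x0 a n P.
Proof.
move=> dP h1 h2.
have S0 : (0 < #|S|)%N by apply/card_gt0P; exists x0.
set k := absz (a - a')%R.
set k' := (n' - n - k)%N.
have ea : a' = (a - Posz k)%R by rewrite /k; lia.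
have en : n' = (k + (n + k'))%N by rewrite /k' /k; lia.
have dP' : dep a (n + k') P by apply: dep_mono dP _ _; lia.
rewrite /dens ea en cnt_left // cnt_right //.
rewrite !expnD !natrM.
have hS : forall m, ((#|S| ^ m)%:R : rat) != 0%R.
  by move=> m; rewrite pnatr_eq0 -lt0n expn_gt0 S0.
field. by rewrite !hS.
Qed.

Lemma sr_radius (S : finType) (c : config S -> config S) :
  isCA c -> is_radius c (some_radius c).
Proof. move=> h; rewrite /some_radius; exact: epsilon_spec. Qed.

Lemma radius_char (S : finType) (c : config S -> config S) r :
  is_radius c r -> forall x y i j, window r x i = window r y j -> c x i = c y j.
Proof. by case=> F hF x y i j e; rewrite !hF e. Qed.

Lemma window_extend (S : finType) r (w : {ffun 'I_(r.*2).+1 -> S}) :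
  window r (extend w) 0 = w.
Proof.
apply/ffunP => k; rewrite ffunE /extend.
have hk := ltn_ord k.
case: ifP => [_|]; last by lia.
congr (w _); apply: val_inj => /=; rewrite inordK; lia.
Qed.

Lemma char_radius (S : finType) (c : config S -> config S) r :
  (forall x y i j, window r x i = window r y j -> c x i = c y j) -> is_radius c r.
Proof.
move=> h; exists (fun w => c (extend w) 0) => x i.
by apply: h; rewrite window_extend.
Qed.

Definition Pd (S : finType) (c d : config S -> config S) : config S -> bool :=
  fun x => c x 0%R != d x 0%R.

Lemma dep_val (S : finType) (c : config S -> config S) r R (i : int) x y :
  is_radius c r -> (r <= R)%N ->
  (forall j : int, (i - Posz R <= j)%R -> (j < i - Posz R + Posz (R.*2).+1)%R -> x j = y j) ->
  c x i = c y i.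
Proof.
move=> hr hR hxy; apply: (radius_char hr); apply/ffunP => k; rewrite !ffunE.
have := ltn_ord k; move=> hk; apply: hxy; lia.
Qed.

Lemma dep_Pd (S : finType) (c d : config S -> config S) r r' R :
  is_radius c r -> is_radius d r' -> (r <= R)%N -> (r' <= R)%N ->
  dep (- Posz R)%R (R.*2).+1 (Pd c d).
Proof.
move=> hc hd h1 h2 x y hxy; rewrite /Pd.
rewrite (dep_val (i:=0%R) (x:=x) (y:=y) hc h1) ?(dep_val (i:=0%R) (x:=x) (y:=y) hd h2) //;
 by move=> j j1 j2; apply: hxy; lia.
Qed.

Lemma delta_r_dens (S : finType) (x0 : S) (c d : config S -> config S) R :
  dep (- Posz R)%R (R.*2).+1 (Pd c d) ->
  delta_r R c d = dens x0 (- Posz R)%R (R.*2).+1 (Pd c d).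
Proof.
move=> dP; rewrite /delta_r /dens; congr (_%:R / _)%R.
rewrite /diffset cardsE -sum1_card big_mkcond /cnt /=.
rewrite (reindex (@finfun_of_tuple S (R.*2).+1)) /=; last first.
  by exists (@tuple_of_finfun S (R.*2).+1) => t _;
   rewrite ?finfun_of_tupleK ?tuple_of_finfunK.
apply: eq_bigr => t _ /=.

rewrite unfold_in.
have -> : (c (extend (finfun_of_tuple t)) 0%R != d (extend (finfun_of_tuple t)) 0%R)
   = Pd c d (ext x0 (- Posz R)%R t).
  apply: dP => j j1 j2; rewrite /extend /ext.
  have -> : ((- Posz R <= j)%R && (j <= Posz R)%R) by lia.
  rewrite j1 ffunE (tnth_nth x0) /= inordK; last by lia.
  congr nth; lia.
by case: (Pd _ _ _).
Qed.

Definition blk (S : finType) (x0 : S) r (s : seq S) (i : nat) : {ffun 'I_(r.*2).+1 -> S} :=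
  [ffun l : 'I_(r.*2).+1 => nth x0 s (i + l)].

Definition fl (S : finType) (x0 : S) r (G : {ffun 'I_(r.*2).+1 -> S} -> S) (s : seq S) :=
  mkseq (fun i => G (blk x0 r s i)) (size s - r.*2).

Lemma size_fl (S : finType) (x0 : S) r (G : {ffun 'I_(r.*2).+1 -> S} -> S) s : size (fl x0 G s) = (size s - r.*2)%N.
Proof. by rewrite size_mkseq. Qed.

Lemma nth_fl (S : finType) (x0 : S) r (G : {ffun 'I_(r.*2).+1 -> S} -> S) s i :
  (i < size s - r.*2)%N -> nth x0 (fl x0 G s) i = G (blk x0 r s i).
Proof. by move=> h; rewrite nth_mkseq. Qed.

Lemma take_fl (S : finType) (x0 : S) r (G : {ffun 'I_(r.*2).+1 -> S} -> S) m (s1 s2 : seq S) :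
  size s1 = (m + r.*2)%N -> take m (fl x0 G (s1 ++ s2)) = fl x0 G s1.
Proof.
move=> h1.
have e : size (take m (fl x0 G (s1 ++ s2))) = m.
  by rewrite size_takel // size_fl size_cat h1; lia.
apply: (@eq_from_nth _ x0).
  by rewrite e size_fl h1; lia.
move=> i; rewrite e => him.
rewrite nth_take // !nth_fl ?size_cat ?h1; try lia.
congr G; apply/ffunP => l; rewrite !ffunE nth_cat h1.
by have := ltn_ord l; case: ifP => //; lia.
Qed.

Lemma drop_fl (S : finType) (x0 : S) r (G : {ffun 'I_(r.*2).+1 -> S} -> S) (s1 s2 : seq S) :
  drop (size s1) (fl x0 G (s1 ++ s2)) = fl x0 G s2.
Proof.
apply: (@eq_from_nth _ x0).
  rewrite size_drop !size_fl size_cat; lia.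
move=> i; rewrite size_drop size_fl size_cat => hi.
rewrite nth_drop !nth_fl ?size_cat; try lia.
congr G; apply/ffunP => l; rewrite !ffunE nth_cat.
case: ifP; first lia. by move=> _; congr nth; lia.
Qed.

Lemma d_ext (S : finType) (x0 : S) r G (d : config S -> config S) a s (i : nat) :
  (forall x j, d x j = G (window r x j)) ->
  d (ext x0 a s) (a + Posz r + Posz i)%R = G (blk x0 r s i).
Proof.
move=> hG; rewrite hG; congr G; apply/ffunP => l; rewrite !ffunE /ext.
case: ifP; last by lia.
by move=> _; congr nth; lia.
Qed.

Lemma surj_fl (S : finType) (x0 : S) r G (d : config S -> config S) :
  (forall x j, d x j = G (window r x j)) -> isSurjective d ->
  forall v : seq S, exists s : seq S, size s = (size v + r.*2)%N /\ fl x0 G s = v.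
Proof.
move=> hG hs v.
have [x hx] := hs (ext x0 0%R v).
exists (mkseq (fun i => x (Posz i - Posz r)%R) (size v + r.*2)).
split; first by rewrite size_mkseq.
apply: (@eq_from_nth _ x0).
  rewrite size_fl size_mkseq; lia.
move=> i; rewrite size_fl size_mkseq => hi.
rewrite nth_fl ?size_mkseq //.
have -> : nth x0 v i = ext x0 0%R v (Posz i) by rewrite /ext le0z_nat subr0.
rewrite -hx hG; congr G; apply/ffunP => l; rewrite !ffunE nth_mkseq; last first.
  have := ltn_ord l; lia.
congr x; lia.
Qed.

Lemma sum_tuple_eqg (T : finType) m (w : seq T) (g : seq T -> nat) :
  size w = m -> \sum_(u : m.-tuple T) (w == val u) * g (val u) = g w.
Proof.
move=> h; have h' : size w == m by apply/eqP.
rewrite (bigD1 (Tuple h')) //= eqxx mul1n big1 ?addn0 // => u hu.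
case: eqP => // e; exfalso; move/eqP: hu; apply; apply: val_inj => /=; by rewrite e.
Qed.

Lemma sum_tuple_eq1 (T : finType) m (w : seq T) :
  \sum_(u : m.-tuple T) (w == val u) <= 1.
Proof.
case: (eqVneq (size w) m) => h.
  have E := sum_tuple_eqg (fun _ => 1%N) h.
  rewrite (eq_bigr _ (fun u _ => muln1 _)) in E; by rewrite E.
rewrite big1 // => u _; case: eqP => // e; move: h; by rewrite e size_tuple eqxx.
Qed.

Lemma sum_cons (T : finType) k (F : seq T -> nat) :
  \sum_(Y : k.+1.-tuple T) F Y = \sum_(y : T) \sum_(Y : k.-tuple T) F (y :: Y).
Proof.
rewrite pair_bigA /=.
pose h (p : T * k.-tuple T) := cons_tuple p.1 p.2.
rewrite (reindex h) //=.
exists (fun t : k.+1.-tuple T => (thead t, behead_tuple t)) => [p _|t _].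
- by case: p => y Y; congr pair; apply: val_inj.
- by apply: val_inj; rewrite /h /= [in RHS](tuple_eta t).
Qed.

Section Bal.
Variables (S : finType) (x0 : S) (r : nat) (G : {ffun 'I_(r.*2).+1 -> S} -> S).

Definition preN N (v : seq S) := \sum_(s : N.-tuple S) (fl x0 G s == v).


Lemma glue_pt m (u v : seq S) (s1 : (m + r.*2).-tuple S) (s2 : seq S) :
  size u = m ->
  \sum_(y : (r.*2).-tuple S) (fl x0 G (s1 ++ s2) == u ++ y ++ v)
   <= (fl x0 G s1 == u) * (fl x0 G s2 == v).
Proof.
move=> hu.
have hs1 : size s1 = (m + r.*2)%N by rewrite size_tuple.
case: (boolP ((fl x0 G s1 == u) && (fl x0 G s2 == v))) => [/andP[/eqP h1 /eqP h2]|h].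
  rewrite h1 h2 !eqxx muln1.
  apply: leq_trans (sum_tuple_eq1 _ (take r.*2 (drop m (fl x0 G (s1 ++ s2))))).
  apply: leq_sum => y _; case: eqP => // ->.
  by rewrite drop_size_cat // take_size_cat ?size_tuple ?eqxx.
rewrite big1 // => y _; case: eqP => // e; exfalso; move/negP: h; apply.
apply/andP; split; apply/eqP.
  by rewrite -(take_fl x0 G s2 hs1) e take_size_cat.
rewrite -(drop_fl x0 G s1 s2) e hs1 catA drop_size_cat //.
by rewrite size_cat size_tuple hu.
Qed.

Lemma glue m N (u v : seq S) :
  size u = m ->
  \sum_(y : (r.*2).-tuple S) preN (m + r.*2 + N) (u ++ y ++ v)
   <= preN (m + r.*2) u * preN N v.
Proof.
move=> hu; rewrite /preN exchange_big /=.
rewrite (sum_cat _ _ (fun s => \sum_(y : (r.*2).-tuple S) (fl x0 G s == u ++ y ++ v))).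
rewrite big_distrl /=; apply: leq_sum => s1 _.
rewrite big_distrr /=; apply: leq_sum => s2 _.
exact: glue_pt.
Qed.


Definition wordY (u : seq S) (Y : seq (seq S)) := foldr (fun y w => u ++ y ++ w) u Y.
Definition NN n k := iter k (addn n) n.
Definition Qk m u k := \sum_(Y : k.-tuple ((r.*2).-tuple S))
   preN (NN (m + r.*2) k) (wordY u (map val Y)).

Lemma Q_upper m u k : size u = m -> Qk m u k <= preN (m + r.*2) u ^ k.+1.
Proof.
move=> hu; elim: k => [|k IH].
  rewrite /Qk (eq_bigr (fun _ => preN (m + r.*2) u)); last by move=> Y _; rewrite tuple0.
  by rewrite sum_nat_const card_tuple expn0 mul1n expn1.
rewrite /Qk (sum_cons _ (fun Y : seq ((r.*2).-tuple S) => preN (NN (m + r.*2) k.+1) (wordY u (map val Y)))).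
rewrite exchange_big /=.
apply: (@leq_trans (\sum_(Y : k.-tuple ((r.*2).-tuple S))
   preN (m + r.*2) u * preN (NN (m + r.*2) k) (wordY u (map val Y)))).
  apply: leq_sum => Y _; exact: glue.
by rewrite -big_distrr /= expnS leq_mul2l IH orbT.
Qed.

Lemma size_wordY m u (Y : seq (seq S)) : size u = m ->
  all (fun y => size y == r.*2) Y -> size (wordY u Y) = (size Y * (m + r.*2) + m)%N.
Proof.
move=> hu; elim: Y => [|y Y IH] /=; first by rewrite hu.
case/andP => /eqP hy hY; rewrite !size_cat IH // hu hy mulSn; lia.
Qed.

Lemma NN_eq n k : NN n k = (k * n + n)%N.
Proof. elim: k => [|k IH] //=; rewrite /NN /= -/(NN n k) IH mulSn; lia. Qed.

Lemma pre_pos (d : config S -> config S) :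
  (forall x j, d x j = G (window r x j)) -> isSurjective d ->
  forall N v, N = (size v + r.*2)%N -> 0 < preN N v.
Proof.
move=> hG hs N v hN.
have [s [hs1 hs2]] := surj_fl x0 hG hs v.
have hs' : size s == N by rewrite hs1 hN.
by rewrite /preN (bigD1 (Tuple hs')) //= hs2 eqxx.
Qed.

Lemma Q_lower (d : config S -> config S) m u k :
  (forall x j, d x j = G (window r x j)) -> isSurjective d -> size u = m ->
  (#|S| ^ r.*2) ^ k <= Qk m u k.
Proof.
move=> hG hs hu.
have -> : ((#|S| ^ r.*2) ^ k = \sum_(Y : k.-tuple ((r.*2).-tuple S)) 1)%N.
  by rewrite sum_nat_const !card_tuple muln1.
apply: leq_sum => Y _; apply: (pre_pos hG hs).
rewrite (size_wordY (m:=m)) // ?size_map ?size_tuple ?NN_eq; first lia.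
by apply/allP => y /mapP [z _ ->]; rewrite size_tuple.
Qed.

End Bal.

Lemma bern p k : (p ^ k * (p + k) <= (p + 1) ^ k * p)%N.
Proof.
elim: k => [|k IH]; first by rewrite !expn0 addn0.
rewrite !expnS.
apply: (@leq_trans ((p + 1) * (p ^ k * (p + k)))); last first.
  by rewrite -mulnA leq_mul2l IH orbT.
nia.
Qed.

Lemma pow_bound p q : (forall k, q ^ k <= p ^ k.+1) -> q <= p.
Proof.
move=> h; rewrite leqNgt; apply/negP => hpq.
case: (posnP p) => [p0|pp].
  by have := h 0; rewrite p0.
set k := (p * p + 1)%N.
have h1 : ((p + 1) ^ k <= p ^ k.+1)%N.
  apply: leq_trans (h k); rewrite leq_exp2r ?/k ?addn1 //; lia.
have h2 := bern p k.
have h3 : (p ^ k * (p + k) <= p ^ k * (p * p))%N.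
  apply: (leq_trans h2); rewrite mulnC; apply: leq_trans (leq_mul (leqnn p) h1) _.
  by rewrite expnS; nia.
rewrite leq_pmul2l ?expn_gt0 ?pp // /k in h3; lia.
Qed.

Section Bal2.
Variables (S : finType) (x0 : S) (r : nat) (G : {ffun 'I_(r.*2).+1 -> S} -> S).
Variable (d : config S -> config S).
Hypothesis hG : forall x j, d x j = G (window r x j).
Hypothesis hs : isSurjective d.

Lemma pre_ge m (u : seq S) : size u = m -> #|S| ^ r.*2 <= preN x0 G (m + r.*2) u.
Proof.
move=> hu; apply: pow_bound => k.
apply: leq_trans (Q_lower x0 k hG hs hu) (Q_upper x0 G k hu).
Qed.

Lemma pre_sum m : \sum_(u : m.-tuple S) preN x0 G (m + r.*2) u = #|S| ^ (m + r.*2).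
Proof.
rewrite /preN exchange_big /=.
rewrite (eq_bigr (fun _ => 1%N)); first by rewrite sum_nat_const card_tuple muln1.
move=> s _.
have E := sum_tuple_eqg (fun _ => 1%N) (size_fl x0 G s).
rewrite (eq_bigr _ (fun u _ => muln1 _)) size_tuple addnK in E.
rewrite -[RHS]E; apply: eq_bigr => u _; by rewrite eq_sym.
Qed.

Lemma pre_eq m (u : m.-tuple S) : preN x0 G (m + r.*2) u = #|S| ^ r.*2.
Proof.
have ge : forall u : m.-tuple S, #|S| ^ r.*2 <= preN x0 G (m + r.*2) u.
  by move=> v; apply: pre_ge; rewrite size_tuple.
have := @sumnB _ (index_enum (m.-tuple S)) (fun _ => true) (fun _ => #|S| ^ r.*2) (preN x0 G (m + r.*2)) (fun i _ => ge i).
rewrite pre_sum sum_nat_const card_tuple expnD subnn => /eqP.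
rewrite sum_nat_eq0 => /forallP /(_ u) /implyP /(_ isT).
rewrite subn_eq0 => h; apply/eqP; by rewrite eqn_leq h ge.
Qed.


Lemma balance_cnt a m (P : config S -> bool) : dep (a + Posz r)%R m P ->
  cnt x0 a (m + r.*2) (fun x => P (d x)) = (#|S| ^ r.*2 * cnt x0 (a + Posz r)%R m P)%N.
Proof.
move=> dP; rewrite /cnt.
transitivity (\sum_(s : (m + r.*2).-tuple S) \sum_(u : m.-tuple S)
   (fl x0 G s == val u) * P (ext x0 (a + Posz r)%R u)).
  apply: eq_bigr => s _.
  have hsz : size (fl x0 G s) = m by rewrite size_fl size_tuple addnK.
  have E := sum_tuple_eqg (fun w => nat_of_bool (P (ext x0 (a + Posz r)%R w))) hsz.
  rewrite E; congr nat_of_bool; apply: dP => j j1 j2.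
  set i := absz (j - (a + Posz r))%R.
  have ej : j = (a + Posz r + Posz i)%R by rewrite /i; lia.
  have hi : (i < m)%N by rewrite /i; lia.
  rewrite ej (d_ext x0 a s i hG) /ext.
  have -> : (a + Posz r <= a + Posz r + Posz i)%R by lia.
  have -> : absz (a + Posz r + Posz i - (a + Posz r))%R = i by lia.
  by rewrite nth_fl // size_tuple addnK.
rewrite exchange_big /= big_distrr /=; apply: eq_bigr => u _.
by rewrite -big_distrl /= -/(preN x0 G _ _) pre_eq.
Qed.

End Bal2.

Lemma win_entry (S : finType) R (x y : config S) i j (k : nat) :
  window R x i = window R y j -> (k < (R.*2).+1)%N ->
  x (i - Posz R + Posz k)%R = y (j - Posz R + Posz k)%R.
Proof.
move=> e hk; have := congr1 (fun w : {ffun 'I_(R.*2).+1 -> S} => w (inord k)) e; by rewrite /= !ffunE inordK.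
Qed.

Lemma comp_radius (S : finType) (c d : config S -> config S) rc rd :
  is_radius c rc -> is_radius d rd -> is_radius (fun x => c (d x)) (rc + rd).
Proof.
move=> hc hd; apply: char_radius => x y i j e.
apply: (radius_char hc); apply/ffunP => k; rewrite !ffunE.
apply: (radius_char hd); apply/ffunP => l; rewrite !ffunE.
have hk := ltn_ord k; have hl := ltn_ord l.
have h := win_entry (k := (k + l)%N) e.
have e1 : (i - Posz rc + Posz k - Posz rd + Posz l = i - Posz (rc + rd) + Posz (k + l))%R by lia.
have e2 : (j - Posz rc + Posz k - Posz rd + Posz l = j - Posz (rc + rd) + Posz (k + l))%R by lia.
rewrite e1 e2; apply: h; lia.
Qed.

Lemma isCA_comp (S : finType) (c d : config S -> config S) :
  isCA c -> isCA d -> isCA (fun x => c (d x)).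
Proof. move=> [rc hc] [rd hd]; exists (rc + rd); exact: comp_radius. Qed.

Definition shift (S : finType) (k : int) (x : config S) : config S := fun j => x (j + k)%R.

Lemma d_shift (S : finType) (d : config S -> config S) r k x :
  is_radius d r -> d (shift k x) 0%R = d x k.
Proof.
move=> hd; apply: (radius_char hd); apply/ffunP => l; rewrite !ffunE /shift.
congr x; lia.
Qed.

Lemma cnt_shift (S : finType) (x0 : S) a n k (P : config S -> bool) :
  cnt x0 a n (fun x => P (shift k x)) = cnt x0 (a - k)%R n P.
Proof.
rewrite /cnt; apply: eq_bigr => t _; congr nat_of_bool; congr P.
apply: functional_extensionality => j; rewrite /shift /ext.
have -> : ((a <= j + k) = (a - k <= j))%R by apply/idP/idP; lia.
case: ifP => // _; congr nth; lia.
Qed.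

Lemma pt2 (S : finType) (c d d' : config S -> config S) rc rd rd' x :
  is_radius c rc -> is_radius d rd -> is_radius d' rd' ->
  (Pd (fun x => c (d x)) (fun x => c (d' x)) x <=
   \sum_(i < (rc.*2).+1) Pd d d' (shift (Posz i - Posz rc)%R x))%N.
Proof.
move=> hc hd hd'; rewrite leqNgt; apply/negP => h.
have h0 : (\sum_(i < (rc.*2).+1) Pd d d' (shift (Posz i - Posz rc)%R x) == 0)%N.
  by move: h; case: (Pd _ _ _); case: (\sum_(i < _) _).
have h1 : Pd (fun x => c (d x)) (fun x => c (d' x)) x by move: h; case: (Pd _ _ _).
move: h0; rewrite sum_nat_eq0 => /forallP h2.
move: h1; rewrite /Pd => /eqP; apply.
apply: (radius_char hc); apply/ffunP => k; rewrite !ffunE.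
have := h2 k; rewrite /Pd (d_shift _ _ hd) (d_shift _ _ hd').
have -> : (Posz k - Posz rc = 0 - Posz rc + Posz k)%R by lia.
move=> /= H; apply/eqP; move: H.
by case: (d x _ == d' x _).
Qed.

Lemma pt1 (S : finType) (c c' d d' : config S -> config S) x :
  (Pd (fun x => c (d x)) (fun x => c' (d' x)) x <=
   Pd (fun x => c (d x)) (fun x => c (d' x)) x +
   Pd (fun x => c (d' x)) (fun x => c' (d' x)) x)%N.
Proof.
rewrite /Pd; case: (c (d x) 0%R =P c (d' x) 0%R) => [->|] /=; first by case: eqP.
by case: eqP.
Qed.

Lemma dens_sum (S : finType) (x0 : S) a n (P : config S -> bool) K (Q : 'I_K -> config S -> bool) :
  (forall x, (P x <= \sum_(i < K) Q i x)%N) ->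
  (dens x0 a n P <= \sum_(i < K) dens x0 a n (Q i))%R.
Proof.
move=> hPQ.
have h : (cnt x0 a n P <= \sum_(i < K) cnt x0 a n (Q i))%N.
  rewrite /cnt exchange_big /=; apply: leq_sum => t _; exact: hPQ.
rewrite /dens -mulr_suml -natr_sum; apply: ler_wpM2r.
  by rewrite invr_ge0 ler0n.
by rewrite ler_nat.
Qed.

Lemma dens_le2 (S : finType) (x0 : S) a n (P Q1 Q2 : config S -> bool) :
  (forall x, (P x <= Q1 x + Q2 x)%N) ->
  (dens x0 a n P <= dens x0 a n Q1 + dens x0 a n Q2)%R.
Proof.
move=> hPQ.
have h : (cnt x0 a n P <= cnt x0 a n Q1 + cnt x0 a n Q2)%N.
  rewrite /cnt -big_split /=; apply: leq_sum => t _; exact: hPQ.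
rewrite /dens -mulrDl -natrD; apply: ler_wpM2r.
  by rewrite invr_ge0 ler0n.
by rewrite ler_nat.
Qed.

Lemma delta_dens (S : finType) (x0 : S) (c d : config S -> config S) a n :
  isCA c -> isCA d ->
  (a <= - Posz (maxn (some_radius c) (some_radius d)))%R ->
  (Posz (maxn (some_radius c) (some_radius d)) + 1 <= a + Posz n)%R ->
  delta c d = dens x0 a n (Pd c d).
Proof.
move=> hc hd h1 h2.
have dP := dep_Pd (sr_radius hc) (sr_radius hd) (leq_maxl _ _) (leq_maxr _ _).
rewrite /delta (delta_r_dens x0 dP); symmetry; apply: dens_eq => //; lia.
Qed.

Lemma dep_comp (S : finType) (d : config S -> config S) r a n (P : config S -> bool) :
  is_radius d r -> dep a n P -> dep (a - Posz r)%R (n + r.*2) (fun x => P (d x)).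
Proof.
move=> hd dP x y hxy; apply: dP => j j1 j2.
apply: (radius_char hd); apply/ffunP => l; rewrite !ffunE.
have := ltn_ord l => hl; apply: hxy; lia.
Qed.
Local Open Scope ring_scope.

Theorem mainTheorem4 (S : finType) (hS : (1 < #|S|)%N)
  (c d : config S -> config S) (hc : isCA c) (hd : isCA d)
  (hdsur : isSurjective d) (eps : rat) (heps : 0 < eps) :
  exists2 eta : rat, 0 < eta &
    forall c' d' : config S -> config S,
      isCA c' -> isCA d' -> isSurjective d' ->
      delta c c' < eta -> delta d d' < eta ->
      delta (fun x => c (d x)) (fun x => c' (d' x)) < eps.
Proof.
have /card_gt0P [x0 _] : (0 < #|S|)%N by lia.
set rc := some_radius c.
have hcr : is_radius c rc := sr_radius hc.
set K := (rc.*2).+1.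
have hK1 : ((K.+1)%:R : rat) = K%:R + 1 by rewrite -natr1.
have hK0 : (K%:R + 1 : rat) != 0 by rewrite natr1 pnatr_eq0.
exists (eps / (K.+1)%:R); first by rewrite divr_gt0 // ltr0Sn.
move=> c' d' hc' hd' hsd' hcc hdd.
set eta := eps / (K.+1)%:R in hcc hdd *.
have hcd : isCA (fun x => c (d x)) := isCA_comp hc hd.
have hcd' : isCA (fun x => c' (d' x)) := isCA_comp hc' hd'.
set rd := some_radius d. set rd' := some_radius d'. set rc' := some_radius c'.
set R1 := maxn rc rc'. set r1 := maxn rd rd'.
set Rc := maxn (some_radius (fun x => c (d x))) (some_radius (fun x => c' (d' x))).
set M := (Rc + (rc + r1) + (R1 + rd'))%N.
set a := (- Posz M)%R. set n := (M.*2).+1.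
have E1 : delta (fun x => c (d x)) (fun x => c' (d' x)) =
          dens x0 a n (Pd (fun x => c (d x)) (fun x => c' (d' x))).
  by apply: delta_dens => //; rewrite /a /n -/Rc; lia.
have L1 := dens_le2 x0 a n (pt1 c c' d d').
have L2 : dens x0 a n (Pd (fun x => c (d x)) (fun x => c (d' x))) <= K%:R * delta d d'.
  apply: le_trans (dens_sum x0 a n
     (Q := fun (i : 'I_K) x => Pd d d' (shift (Posz i - Posz rc)%R x))
     (fun x => pt2 x hcr (sr_radius hd) (sr_radius hd'))) _.
  rewrite (eq_bigr (fun _ => delta d d')); last first.
    move=> i _.
    have hi := ltn_ord i.
    rewrite /dens (cnt_shift x0 a n (Posz i - Posz rc)%R (Pd d d')).
    rewrite (delta_dens x0 (a := (a - (Posz i - Posz rc))%R) (n := n) hd hd') //;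
      rewrite /a /n -/rd -/rd' -/r1; lia.
  by rewrite sumr_const card_ord mulr_natl.
have L3 : dens x0 a n (Pd (fun x => c (d' x)) (fun x => c' (d' x))) = delta c c'.
  have [G hG] := sr_radius hd'.
  have dP1 := dep_Pd (sr_radius hc) (sr_radius hc') (leq_maxl rc rc') (leq_maxr rc rc').
  have dP3 := dep_comp (sr_radius hd') dP1.
  have e : (- Posz R1 - Posz rd' + Posz rd' = - Posz R1)%R by lia.
  rewrite -e in dP1.
  change (Pd (fun x => c (d' x)) (fun x => c' (d' x))) with (fun x => Pd c c' (d' x)).
  rewrite (dens_eq x0 dP3); [|rewrite /a; lia|rewrite /a /n; lia].
  rewrite /dens (balance_cnt x0 hG hsd' dP1) e.
  rewrite (delta_dens x0 (a := (- Posz R1)%R) (n := (R1.*2).+1) hc hc'); [|lia|lia].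
  rewrite /dens natrM expnD natrM.
  have hS0 : forall m, ((#|S| ^ m)%:R : rat) != 0.
    by move=> m; rewrite pnatr_eq0 -lt0n expn_gt0 (ltnW hS).
  field; by rewrite !hS0.
have hKd : K%:R * delta d d' <= K%:R * eta by rewrite ler_wpM2l // ltW.
have hKe : K%:R * eta + eta = eps by rewrite /eta hK1; field.
rewrite E1; apply: le_lt_trans L1 _; rewrite L3; lra.
Qed.
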